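(* In the setting where $X_N\in\mathbb{R}^{N\times M}$ (rows $x_n^\top$), $Y_N\in\mathbb{R}^N$, $x\in\mathbb{R}^M$, $\lambda>0$, $\sigma>0$, $w(\theta)=\exp\{-\frac{\lambda}{2\sigma^2}\|\theta\|^2\}$, $P_\lambda=(X_N^\top X_N+\lambda I)^{-1}$, $K_\lambda=1+x^\top P_\lambda x$, $\hat\theta_\lambda=P_\lambda X_N^\top Y_N$, and $\hat\theta_y=\arg\min_\theta\big[\sum_{n}(y_n-\theta^\top x_n)^2+(y-\theta^\top x)^2+\lambda\|\theta\|^2\big]$, the LpNML distribution $$q_{\mathrm{LpNML}}(y\mid x)=\frac{p_{\hat\theta_y}(y\mid x)\,w(\hat\theta_y)}{\int_{\mathbb{R}}p_{\hat\theta_{y'}}(y'\mid x)\,w(\hat\theta_{y'})\,dy'}$$ is the Gaussian $\mathcal{N}\big(\hat\theta_\lambda^\top x-\hat\mu,\ \hat\sigma^2\big)$, where $$\hat\mu=\frac{\lambda K_\lambda\,\hat\theta_\lambda^\top P_\lambda x}{1+\lambda x^\top P_\lambda^2x},\qquad \hat\sigma^2=\frac{\sigma^2K_\lambda^2}{1+\lambda x^\top P_\lambda^2x}.$$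
   Context: $p_\theta(y\mid x)=\frac{1}{\sqrt{2\pi\sigma^2}}\exp\{-\frac{1}{2\sigma^2}(y-\theta^\top x)^2\}$. *)

(* Defs.v *)
From HB Require Import structures.
From mathcomp Require Import all_boot all_order all_algebra.
From mathcomp Require Import all_classical all_reals all_analysis.
Set Implicit Arguments. Unset Strict Implicit. Unset Printing Implicit Defensive.
Import Order.TTheory GRing.Theory Num.Theory.
Local Open Scope ring_scope.

Section LpNML.
Variable R : realType.

Definition dotv (M : nat) (u v : 'cV[R]_M) : R := \sum_(i < M) u i 0 * v i 0.

Definition gauss_pdf (mu s2 y : R) : R :=
  (Num.sqrt (2 * pi * s2))^-1 * expR (- (y - mu) ^+ 2 / (2 * s2)).

Definition p_model (M : nat) (sigma : R) (theta x : 'cV[R]_M) (y : R) : R :=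
  gauss_pdf (dotv theta x) (sigma ^+ 2) y.

Definition wprior (M : nat) (lambda sigma : R) (theta : 'cV[R]_M) : R :=
  expR (- (lambda / (2 * sigma ^+ 2)) * dotv theta theta).

Definition ridge_obj (N M : nat) (X : 'M[R]_(N, M)) (Y : 'cV[R]_N)
  (x : 'cV[R]_M) (lambda y : R) (theta : 'cV[R]_M) : R :=
  \sum_(n < N) (Y n 0 - (X *m theta) n 0) ^+ 2
  + (y - dotv theta x) ^+ 2 + lambda * dotv theta theta.

Definition is_argmin (N M : nat) (X : 'M[R]_(N, M)) (Y : 'cV[R]_N)
  (x : 'cV[R]_M) (lambda y : R) (theta : 'cV[R]_M) : Prop :=
  forall theta', ridge_obj X Y x lambda y theta <= ridge_obj X Y x lambda y theta'.

Definition q_LpNML (M : nat) (sigma lambda : R) (x : 'cV[R]_M)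
  (thy : R -> 'cV[R]_M) (y : R) : R :=
  (p_model sigma (thy y) x y * wprior lambda sigma (thy y)) /
  fine (\int[@lebesgue_measure R]_(y' in [set: R])
          (p_model sigma (thy y') x y' * wprior lambda sigma (thy y'))%:E).

Definition P_lam (N M : nat) (X : 'M[R]_(N, M)) (lambda : R) : 'M[R]_M :=
  invmx (X^T *m X + lambda%:M).

End LpNML.

(* Main.v *)
Require Import Defs.
From HB Require Import structures.
From mathcomp Require Import all_boot all_order all_algebra.
From mathcomp Require Import all_classical all_reals all_analysis.
From mathcomp Require Import ring lra.
Import Order.TTheory GRing.Theory Num.Theory.
Local Open Scope ring_scope.

Section Aux.
Variable R : realType.
Implicit Types (M : nat).

Lemma dotvE M (u v : 'cV[R]_M) : dotv u v = (u^T *m v) 0 0.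
Proof. by rewrite /dotv mxE; apply: eq_bigr => i _; rewrite mxE. Qed.

Lemma dotvC M (u v : 'cV[R]_M) : dotv u v = dotv v u.
Proof. by rewrite /dotv; apply: eq_bigr => i _; rewrite mulrC. Qed.

Lemma dotvDl M (u v w : 'cV[R]_M) : dotv (u + v) w = dotv u w + dotv v w.
Proof. by rewrite /dotv -big_split; apply: eq_bigr => i _; rewrite mxE mulrDl. Qed.

Lemma dotvDr M (u v w : 'cV[R]_M) : dotv w (u + v) = dotv w u + dotv w v.
Proof. by rewrite dotvC dotvDl !(dotvC _ w). Qed.

Lemma dotvZl M a (u v : 'cV[R]_M) : dotv (a *: u) v = a * dotv u v.
Proof. by rewrite /dotv mulr_sumr; apply: eq_bigr => i _; rewrite mxE mulrA. Qed.

Lemma dotvZr M a (u v : 'cV[R]_M) : dotv v (a *: u) = a * dotv v u.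
Proof. by rewrite dotvC dotvZl dotvC. Qed.

Lemma dotvNl M (u v : 'cV[R]_M) : dotv (- u) v = - dotv u v.
Proof. by rewrite -scaleN1r dotvZl mulN1r. Qed.

Lemma dotvNr M (u v : 'cV[R]_M) : dotv v (- u) = - dotv v u.
Proof. by rewrite dotvC dotvNl dotvC. Qed.

Lemma dotvBl M (u v w : 'cV[R]_M) : dotv (u - v) w = dotv u w - dotv v w.
Proof. by rewrite dotvDl dotvNl. Qed.

Lemma dotvBr M (u v w : 'cV[R]_M) : dotv w (u - v) = dotv w u - dotv w v.
Proof. by rewrite dotvDr dotvNr. Qed.

Lemma dotv0l M (u : 'cV[R]_M) : dotv 0 u = 0.
Proof. by rewrite /dotv big1 // => i _; rewrite mxE mul0r. Qed.

Lemma dotv_mul M N (A : 'M[R]_(N, M)) u v : dotv (A *m u) v = dotv u (A^T *m v).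
Proof. by rewrite !dotvE trmx_mul mulmxA. Qed.

Lemma dotv_ge0 M (u : 'cV[R]_M) : 0 <= dotv u u.
Proof. by rewrite /dotv sumr_ge0 // => i _; rewrite -expr2 sqr_ge0. Qed.

Lemma dotv_eq0 M (u : 'cV[R]_M) : dotv u u = 0 -> u = 0.
Proof.
move=> /eqP; rewrite /dotv psumr_eq0; last by move=> i _; rewrite -expr2 sqr_ge0.
move=> /allP H; apply/matrixP => i j; rewrite (ord1 j) mxE.
have := H i (mem_index_enum i); rewrite -expr2 sqrf_eq0 => /eqP //.
Qed.

Lemma sumsqE N M (X : 'M[R]_(N, M)) (Y : 'cV[R]_N) (th : 'cV[R]_M) :
  \sum_(n < N) (Y n 0 - (X *m th) n 0) ^+ 2 = dotv (Y - X *m th) (Y - X *m th).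
Proof. by rewrite /dotv; apply: eq_bigr => i _; rewrite !mxE expr2. Qed.


Lemma quadA N M (X : 'M[R]_(N, M)) (lambda : R) (w : 'cV[R]_M) :
  dotv w ((X^T *m X + lambda%:M) *m w) = dotv (X *m w) (X *m w) + lambda * dotv w w.
Proof.
rewrite mulmxDl mul_scalar_mx dotvDr dotvZr -mulmxA dotvC dotv_mul trmxK.
by [].
Qed.

Lemma Asym N M (X : 'M[R]_(N, M)) (lambda : R) :
  (X^T *m X + lambda%:M)^T = X^T *m X + lambda%:M.
Proof. by rewrite linearD /= trmx_mul trmxK tr_scalar_mx. Qed.

Lemma Aunit N M (X : 'M[R]_(N, M)) (lambda : R) : 0 < lambda ->
  (X^T *m X + lambda%:M) \in unitmx.
Proof.
move=> hl; set A := X^T *m X + lambda%:M.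
rewrite -row_free_unit -kermx_eq0; apply/negPn/negP => nz.
set v := nz_row (kermx A).
have vA : v *m A = 0 by apply/sub_kermxP; exact: nz_row_sub.
have Aw : A *m v^T = 0 by rewrite -[A]Asym -trmx_mul vA linear0.
have := quadA _ _ X lambda v^T; rewrite -/A Aw.
rewrite [dotv _ 0]dotvC dotv0l => /esym H.
have h1 := dotv_ge0 _ (X *m v^T); have h2 := dotv_ge0 _ v^T.
have : dotv v^T v^T = 0.
  apply/eqP; rewrite eq_le h2 andbT.
  rewrite -(@pmulr_rle0 _ lambda) //; lra.
move/dotv_eq0 => /(congr1 trmx); rewrite trmxK linear0 => /eqP.
by rewrite nz_row_eq0 (negbTE nz).
Qed.


Lemma obj_expand N M (X : 'M[R]_(N, M)) (Y : 'cV[R]_N) (x : 'cV[R]_M) (lambda y : R)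
  (ts d : 'cV[R]_M) :
  X^T *m (Y - X *m ts) + (y - dotv ts x) *: x - lambda *: ts = 0 ->
  ridge_obj X Y x lambda y (ts + d) = ridge_obj X Y x lambda y ts +
    (dotv (X *m d) (X *m d) + dotv d x ^+ 2 + lambda * dotv d d).
Proof.
move=> H.
rewrite /ridge_obj !sumsqE mulmxDr.
set r := Y - X *m ts.
have H' : dotv d (X^T *m r) + (y - dotv ts x) * dotv d x
          - lambda * dotv d ts = 0.
  by rewrite -dotvZr -dotvZr -dotvDr -dotvBr /r H dotvC dotv0l.
have -> : Y - (X *m ts + X *m d) = r - X *m d by rewrite /r opprD addrA.
clearbody r.
rewrite !dotvBl !dotvBr !dotvDl !dotvDr (dotvC _ r (X *m d)) (dotv_mul _ _ X d r).
rewrite (dotvC _ ts d).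
move: H'; set p := dotv d (X^T *m r); set q := dotv d x.
move=> H'.
have -> : lambda * (dotv ts ts + dotv d ts + (dotv d ts + dotv d d)) =
  lambda * dotv ts ts + 2 * (lambda * dotv d ts) + lambda * dotv d d by ring.
have -> : lambda * dotv d ts = p + (y - dotv ts x) * q by lra.
ring.
Qed.

Lemma gauss_normal (m s2 : R) : 0 < s2 -> gauss_pdf m s2 = normal_pdf m (Num.sqrt s2).
Proof.
move=> hs; apply/funext => z.
rewrite normal_pdfE; last by rewrite gt_eqF // sqrtr_gt0.
rewrite /gauss_pdf /normal_peak /normal_fun sqr_sqrtr ?ltW //.
congr (_ * expR _).
  by rewrite -mulr_natr; congr (_^-1); congr Num.sqrt; ring.
rewrite -mulr_natr. congr (- _ / _). ring.
Qed.

End Aux.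

Theorem mainTheorem10 (R : realType) (N M : nat) (X : 'M[R]_(N, M))
  (Y : 'cV[R]_N) (x : 'cV[R]_M) (lambda sigma : R)
  (hlambda : 0 < lambda) (hsigma : 0 < sigma)
  (thy : R -> 'cV[R]_M)
  (hthy : forall y : R, is_argmin X Y x lambda y (thy y)) :
  let P := P_lam X lambda in
  let K := 1 + dotv x (P *m x) in
  let th := P *m (X^T *m Y) in
  let D := 1 + lambda * dotv x (P *m (P *m x)) in
  let muhat := lambda * K * dotv th (P *m x) / D in
  let s2hat := sigma ^+ 2 * K ^+ 2 / D in
  forall y : R, q_LpNML sigma lambda x thy y = gauss_pdf (dotv th x - muhat) s2hat y.
Proof.
move=> P K th D muhat s2hat y.
rewrite /muhat /s2hat /D /K; clear muhat s2hat D K.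
set A := X^T *m X + lambda%:M.
have hA : A \in unitmx := Aunit _ _ _ X lambda hlambda.
have PE : P = invmx A by [].
have AP : A *m P = 1%:M by rewrite PE mulmxV.
have PA : P *m A = 1%:M by rewrite PE mulVmx.
have Psym : P^T = P by rewrite PE trmx_inv Asym.
have uuE : dotv x (P *m (P *m x)) = dotv (P *m x) (P *m x).
  by rewrite dotvC dotv_mul Psym.
rewrite uuE.
set u := P *m x.
set b := X^T *m Y.
have xE : A *m u = x by rewrite /u mulmxA AP mul1mx.
have thE : A *m th = b by rewrite /th mulmxA AP mul1mx.
set a := dotv th x.
set c := dotv th u.
set uu := dotv u u.
set xu := dotv x u.
have xu_ge0 : 0 <= xu.
  rewrite /xu -{1}xE dotvC quadA.
  by apply: addr_ge0; [exact: dotv_ge0| apply: mulr_ge0; [exact: ltW| exact: dotv_ge0]].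
have uu_ge0 : 0 <= uu by exact: dotv_ge0.
have Kpos : 0 < 1 + xu by lra.
have Dpos : 0 < 1 + lambda * uu.
  have : 0 <= lambda * uu by apply: mulr_ge0 => //; exact: ltW.
  lra.
have thyE : forall y', thy y' = th + ((y' - a) / (1 + xu)) *: u.
  move=> y'; set t := (y' - a) / (1 + xu); set ts := th + t *: u.
  have e1 : y' - dotv ts x = t.
    rewrite /ts dotvDl dotvZl (dotvC _ _ u x) -/a -/xu /t.
    by field; lra.
  have Ats : A *m ts = b + t *: x by rewrite /ts mulmxDr thE -scalemxAr xE.
  have Ats' : A *m ts = X^T *m X *m ts + lambda *: ts by rewrite mulmxDl mul_scalar_mx.
  have cond : X^T *m (Y - X *m ts) + (y' - dotv ts x) *: x - lambda *: ts = 0.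
    rewrite e1 mulmxBr mulmxA -/b.
    have -> : X^T *m X *m ts = b + t *: x - lambda *: ts.
      by rewrite -Ats Ats' addrK.
    by rewrite !opprD !opprK !addrA addrN add0r addrAC addrK addNr.
  set d := thy y' - ts.
  have td : thy y' = ts + d by rewrite /d addrC subrK.
  have h := hthy y' ts; rewrite td obj_expand // in h.
  have h1 := dotv_ge0 _ _ (X *m d); have h2 := sqr_ge0 (dotv d x); have h3 := dotv_ge0 _ _ d.
  have : lambda * dotv d d <= 0 by lra.
  rewrite pmulr_rle0 // => h4.
  have : dotv d d = 0 by apply/eqP; rewrite eq_le h4 h3.
  by move/dotv_eq0; rewrite td => ->; rewrite addr0.
have hs2 : 0 < sigma ^+ 2 * (1 + xu) ^+ 2 / (1 + lambda * uu).
  by rewrite divr_gt0 // mulr_gt0 // exprn_gt0.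
set m := a - lambda * (1 + xu) * c / (1 + lambda * uu).
set s2 := sigma ^+ 2 * (1 + xu) ^+ 2 / (1 + lambda * uu).
set Z := - (lambda / (2 * sigma ^+ 2)) * dotv th th
   + lambda ^+ 2 * c ^+ 2 / (2 * sigma ^+ 2 * (1 + lambda * uu)).
set Cc := Num.sqrt (2 * pi * s2) / Num.sqrt (2 * pi * sigma ^+ 2) * expR Z.
have hS : 0 < Num.sqrt (2 * pi * s2).
  by rewrite sqrtr_gt0 mulr_gt0 // mulr_gt0 // pi_gt0.
have hs : 0 < Num.sqrt (2 * pi * sigma ^+ 2).
  by rewrite sqrtr_gt0 mulr_gt0 // ?exprn_gt0 // mulr_gt0 // pi_gt0.
have Ccpos : 0 < Cc by rewrite /Cc mulr_gt0 ?expR_gt0 // divr_gt0.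
have numE : forall y', p_model sigma (thy y') x y' * wprior lambda sigma (thy y')
    = Cc * gauss_pdf m s2 y'.
  move=> y'; rewrite thyE /p_model /gauss_pdf /wprior.
  rewrite dotvDl dotvZl (dotvC _ _ u x) -/a -/xu.
  rewrite !dotvDl !dotvDr !dotvZl !dotvZr (dotvC _ _ u th) -/c -/uu.
  rewrite -(mulrA (Num.sqrt (2 * pi * sigma ^+ 2))^-1) -expRD.
  set E := (X in expR X).
  have -> : E = Z + (- (y' - m) ^+ 2 / (2 * s2)).
    rewrite /E /Z /m /s2; field.
    by rewrite (gt_eqF Dpos) (gt_eqF Kpos) (gt_eqF hsigma).
  rewrite expRD /Cc; field.
  by rewrite (gt_eqF hS) (gt_eqF hs).
rewrite /q_LpNML numE.
under eq_integral do rewrite numE.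
rewrite (gauss_normal _ _ _ hs2) -/s2.
under eq_integral do rewrite EFinM.
rewrite integralZl //=; last exact: integrable_normal_pdf.
rewrite integral_normal_pdf mule1 /=.
by field; rewrite gt_eqF.
Qed.
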